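(* Let $m\ge 2$ be an integer, let $B\subseteq m\mathbb Z$ be finite, and let $F\subseteq\mathbb Z$ be a finite nonempty set whose elements all lie in a single congruence class modulo $m$ different from $0\bmod m$. If there exists $W\subseteq\mathbb Z$ with $m\mathbb Z_-\setminus B=F+W$, then $C=m\mathbb N\cup B\cup F$ arises as a minimal additive complement in $\mathbb Z$.
   Context: $\mathbb N=\{0,1,2,\dots\}$, $m\mathbb N=\{mk:k\in\mathbb N\}$, and $m\mathbb Z_-=\{mk:k\in\mathbb Z,\ k<0\}$. For $C,W\subseteq\mathbb Z$, $C+W=\{c+w:c\in C,w\in W\}$. $C$ is a minimal additive complement (MAC) to $W$ if $C+W=\mathbb Z$ and no proper subset $C'\subsetneq C$ satisfies $C'+W=\mathbb Z$. $C$ arises as a MAC if there exists $W\subseteq\mathbb Z$ to which $C$ is a MAC. *)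

(* Defs.v *)
From Stdlib Require Import ZArith List.
Open Scope Z_scope.

Definition finite_set (A : Z -> Prop) : Prop :=
  exists l : list Z, forall x, A x <-> In x l.

Definition sumset (C W : Z -> Prop) : Z -> Prop :=
  fun z => exists c w, C c /\ W w /\ z = c + w.

Definition mult_nonneg (m : Z) : Z -> Prop :=
  fun z => exists k, 0 <= k /\ z = m * k.

Definition mult_neg (m : Z) : Z -> Prop :=
  fun z => exists k, k < 0 /\ z = m * k.

Definition is_complement (C W : Z -> Prop) : Prop :=
  forall z, sumset C W z.

Definition is_MAC (C W : Z -> Prop) : Prop :=
  is_complement C W /\
  forall C' : Z -> Prop,
    (forall x, C' x -> C x) -> (exists x, C x /\ ~ C' x) ->
    ~ is_complement C' W.

Definition arises_as_MAC (C : Z -> Prop) : Prop :=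
  exists W, is_MAC C W.

(* Main.v *)
Require Import Defs.
From Stdlib Require Import ZArith List Lia Classical.
Open Scope Z_scope.

Lemma sumabs_bound (l : list Z) :
  0 <= fold_right (fun x acc => Z.abs x + acc) 0 l /\
  forall x, In x l -> Z.abs x <= fold_right (fun x acc => Z.abs x + acc) 0 l.
Proof.
  induction l as [|a l [IH1 IH2]]; simpl.
  - split; [lia| intros x []].
  - split; [lia|]. intros x [<-|Hx]; [lia|]. specialize (IH2 x Hx); lia.
Qed.

Lemma fin_bound (B : Z -> Prop) : finite_set B ->
  exists M, 0 <= M /\ forall b, B b -> -M <= b.
Proof.
  intros [l Hl]. destruct (sumabs_bound l) as [H1 H2].
  eexists; split; [exact H1|]. intros b Hb. apply Hl in Hb. specialize (H2 b Hb). lia.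
Qed.

Lemma list_max (l : list Z) : l <> nil -> exists M, In M l /\ forall x, In x l -> x <= M.
Proof.
  induction l as [|a l IH]; intros Hne; [congruence|].
  destruct l as [|b l'].
  - exists a. split; [left; auto|]. intros x [<-|[]]; lia.
  - destruct IH as [M [HM HM2]]; [discriminate|].
    destruct (Z.le_gt_cases a M).
    + exists M. split; [right; auto|]. intros x [<-|Hx]; [lia| auto].
    + exists a. split; [left; auto|]. intros x [<-|Hx]; [lia|]. specialize (HM2 x Hx); lia.
Qed.

Lemma list_min (l : list Z) : l <> nil -> exists M, In M l /\ forall x, In x l -> M <= x.
Proof.
  induction l as [|a l IH]; intros Hne; [congruence|].
  destruct l as [|b l'].
  - exists a. split; [left; auto|]. intros x [<-|[]]; lia.
  - destruct IH as [M [HM HM2]]; [discriminate|].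
    destruct (Z.le_gt_cases M a).
    + exists M. split; [right; auto|]. intros x [<-|Hx]; [lia| auto].
    + exists a. split; [left; auto|]. intros x [<-|Hx]; [lia|]. specialize (HM2 x Hx); lia.
Qed.

Lemma fin_minmax (F : Z -> Prop) : finite_set F -> (exists f, F f) ->
  exists fmin fmax, F fmin /\ F fmax /\ forall f, F f -> fmin <= f <= fmax.
Proof.
  intros [l Hl] [f Hf].
  assert (Hne : l <> nil) by (intro; subst; apply Hl in Hf; destruct Hf).
  destruct (list_max l Hne) as [M [HM HM2]].
  destruct (list_min l Hne) as [N [HN HN2]].
  exists N, M. split; [apply Hl; auto|]. split; [apply Hl; auto|].
  intros g Hg. apply Hl in Hg. split; auto.
Qed.

Lemma core (m : Z) (B F W : Z -> Prop) (f0 fmin fmax Bb T A : Z) :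
  2 <= m -> 0 <= Bb -> (forall b, B b -> -Bb <= b) -> (forall b, B b -> (m | b)) ->
  F f0 -> ~ (m | f0) -> (forall f, F f -> (m | f - f0)) ->
  F fmin -> F fmax -> (forall f, F f -> fmin <= f <= fmax) ->
  (forall z, (mult_neg m z /\ ~ B z) <-> sumset F W z) ->
  T + fmax = -Bb - 1 ->
  (m | A) ->
  A + (2*(fmax-fmin)+1)*(fmax-fmin) + (fmax - fmin) < T + fmin ->
  arises_as_MAC (fun z => mult_nonneg m z \/ B z \/ F z).
Proof.
  intros Hm HBb HBl HBd Hf0 Hnf0 HFc Hfmin Hfmax HFr HW HT HA HA2.
  set (d := fmax - fmin) in *. set (Q := 2*d+1) in *.
  assert (Hd : 0 <= d) by (specialize (HFr _ Hfmin); lia).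
  pose (zf := fun f => A + Q*(f - fmin)).
  pose (S := fun y => exists f g, F f /\ F g /\ f <> g /\ y = zf f - g).
  pose (V := fun y => (W y /\ T <= y) \/ (y < T /\ (m | y + f0) /\ ~ S y)).
  pose (W' := fun x => x = 0 \/ V x \/ (~ (m | x) /\ ~ (m | x + f0))).
  assert (Hzf : forall f, F f -> A <= zf f <= A + Q*d).
  { intros f Hf. pose proof (HFr f Hf). unfold zf. nia. }
  assert (Hsep : forall f h, F f -> F h -> -2*d <= zf h - zf f <= 2*d -> h = f).
  { intros f h Hf Hh Hr.
    assert (E : zf h - zf f = Q*(h-f)) by (unfold zf; ring).
    rewrite E in Hr. destruct (Z.eq_dec h f); auto. exfalso. nia. }
  assert (Hneg : forall k, mult_nonneg m k -> mult_neg m k -> False).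
  { intros k [a [Ha ->]] [b [Hb E]]. nia. }
  assert (Hdivneg : forall z, (m | z) -> z < 0 -> mult_neg m z).
  { intros z [k ->] Hz. exists k. split; [nia| ring]. }
  assert (HVcls : forall y, V y -> (m | y + f0)).
  { intros y [[Hy _]|[_ [Hy _]]]; auto.
    assert (Hs : sumset F W (f0 + y)) by (exists f0, y; auto).
    apply HW in Hs. destruct Hs as [[k [_ Hk]] _]. exists k. lia. }
  assert (HP1 : forall f y, F f -> V y -> mult_neg m (f+y) /\ ~ B (f+y)).
  { intros f y Hf [[Hy _]|[Hy [Hy2 _]]].
    - apply HW. exists f, y; auto.
    - pose proof (HFr f Hf). split.
      + apply Hdivneg; [|lia].
        replace (f + y) with ((f - f0) + (y + f0)) by ring.
        apply Z.divide_add_r; auto.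
      + intro HB. specialize (HBl _ HB). lia. }
  assert (HnotS : forall f, F f -> ~ S (zf f - f)).
  { intros f Hf [h [g [Hh [Hg [Hne E]]]]].
    pose proof (HFr f Hf). pose proof (HFr g Hg).
    assert (h = f) by (apply Hsep; auto; lia). subst h.
    assert (g = f) by lia. congruence. }
  assert (HP2 : forall z, mult_neg m z -> ~ B z -> exists f y, F f /\ V y /\ z = f + y).
  { intros z Hz HBz.
    assert (Hmz : (m | z)) by (destruct Hz as [k [_ ->]]; exists k; ring).
    destruct (Z.le_gt_cases (T + fmax) z) as [Hle|Hlt].
    - assert (Hs : sumset F W z) by (apply HW; auto).
      destruct Hs as [f [w [Hf [Hw E]]]]. exists f, w.
      pose proof (HFr f Hf). split; auto. split; auto. left; split; auto; lia.
    - assert (Hc : forall f, F f -> (m | z - f + f0)).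
      { intros f Hf. replace (z - f + f0) with (z - (f - f0)) by ring.
        apply Z.divide_sub_r; auto. }
      destruct (classic (S (z - fmax))) as [HS1|HS1].
      2:{ exists fmax, (z - fmax). split; auto. split; [|ring].
          right. split; [lia|]. split; auto. }
      destruct HS1 as [f [g [Hf [Hg [Hfg E1]]]]].
      pose proof (Hzf f Hf) as Zf. pose proof (HFr g Hg).
      destruct (classic (S (z - fmin))) as [HS2|HS2].
      2:{ exists fmin, (z - fmin). split; auto. split; [|ring].
          right. split; [lia|]. split; auto. }
      destruct HS2 as [h [g' [Hh [Hg' [Hhg E2]]]]].
      pose proof (HFr g' Hg').
      assert (h = f) by (apply Hsep; auto; lia). subst h.
      assert (z = zf f) by lia. subst z.
      exists f, (zf f - f). split; auto. split; [|ring].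
      right. pose proof (HFr f Hf). split; [lia|]. split; auto. }
  assert (Hunb : forall z, (m | z + f0) -> exists k y, 0 <= k /\ V y /\ z = m*k + y).
  { intros z Hz.
    set (K := Z.abs z + Z.abs A + Z.abs fmax + Z.abs T + 1).
    exists K, (z - m*K). split; [lia|]. split; [|ring].
    right. split; [nia|]. split.
    - replace (z - m*K + f0) with ((z + f0) - m*K) by ring.
      apply Z.divide_sub_r; auto. apply Z.divide_factor_l.
    - intros [f [g [Hf [Hg [_ E]]]]]. pose proof (Hzf f Hf). pose proof (HFr g Hg). nia. }
  exists W'. split.
  - intro z. destruct (classic (m | z)) as [Hmz|Hmz].
    + destruct (Z.le_gt_cases 0 z) as [Hz|Hz].
      * exists z, 0. split; [left|]. destruct Hmz as [k ->]. exists k. split; [nia|ring].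
        split; [left; auto| ring].
      * destruct (classic (B z)) as [HB|HB].
        -- exists z, 0. split; [right; left; auto|]. split; [left; auto|ring].
        -- destruct (HP2 z (Hdivneg z Hmz Hz) HB) as [f [y [Hf [Hy E]]]].
           exists f, y. split; [right; right; auto|]. split; [right; left; auto| auto].
    + destruct (classic (m | z + f0)) as [Hz2|Hz2].
      * destruct (Hunb z Hz2) as [k [y [Hk [Hy E]]]].
        exists (m*k), y. split; [left; exists k; split; auto|]. split; [right; left; auto|auto].
      * exists 0, z. split; [left; exists 0; split; [lia|ring]|]. split; [right; right; auto|ring].
  - intros C' Hsub [c [Hc Hnc]] Hcomp.
    assert (Hcls0 : forall x, mult_nonneg m x \/ B x -> (m | x)).
    { intros x [[k [_ ->]]|Hx]; [exists k; ring| auto]. }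
    destruct (Hcomp c) as [c' [w [Hc' [Hw E]]]].
    pose proof (Hsub c' Hc') as Hc'C.
    destruct Hc as [Hc|[Hc|Hc]].
    +
      assert (Hmc : (m | c)) by (apply Hcls0; tauto).
      destruct Hc'C as [Hc'C|[Hc'C|Hc'C]].
      1,2: assert (Hmc' : (m | c')) by (apply Hcls0; tauto);
        assert (Hmw : (m | w)) by (replace w with (c - c') by lia; apply Z.divide_sub_r; auto);
        destruct Hw as [Hw|[Hw|[Hw _]]];
        [rewrite Hw in E; replace c with c' in Hnc by lia; contradiction
        |apply Hnf0; replace f0 with ((w + f0) - w) by ring; apply Z.divide_sub_r; auto
        |contradiction].
      all: pose proof (HFc c' Hc'C) as Hcf.
      all: destruct Hw as [Hw|[Hw|[_ Hw]]];
        [ apply Hnf0; replace f0 with (c' - (c' - f0)) by ring; apply Z.divide_sub_r; auto;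
          replace c' with c by lia; auto
        | destruct (HP1 c' w Hc'C Hw) as [HN HNB]; rewrite <- E in HN, HNB
        | apply Hw; replace (w + f0) with (c - (c' - f0)) by lia; apply Z.divide_sub_r; auto ].
      all: try tauto.
      all: try (eapply Hneg; eauto).
    +
      assert (Hmc : (m | c)) by (apply Hcls0; tauto).
      destruct Hc'C as [Hc'C|[Hc'C|Hc'C]].
      1,2: assert (Hmc' : (m | c')) by (apply Hcls0; tauto);
        assert (Hmw : (m | w)) by (replace w with (c - c') by lia; apply Z.divide_sub_r; auto);
        destruct Hw as [Hw|[Hw|[Hw _]]];
        [rewrite Hw in E; replace c with c' in Hnc by lia; contradiction
        |apply Hnf0; replace f0 with ((w + f0) - w) by ring; apply Z.divide_sub_r; auto
        |contradiction].
      all: pose proof (HFc c' Hc'C) as Hcf.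
      all: destruct Hw as [Hw|[Hw|[_ Hw]]];
        [ apply Hnf0; replace f0 with (c' - (c' - f0)) by ring; apply Z.divide_sub_r; auto;
          replace c' with c by lia; auto
        | destruct (HP1 c' w Hc'C Hw) as [HN HNB]; rewrite <- E in HN, HNB
        | apply Hw; replace (w + f0) with (c - (c' - f0)) by lia; apply Z.divide_sub_r; auto ].
      all: try tauto.
      all: try (eapply Hneg; eauto).
    +
      clear E Hw Hc' Hc'C c' w.
      destruct (Hcomp (zf c)) as [c' [w [Hc' [Hw E]]]].
      pose proof (Hsub c' Hc') as Hc'C.
      pose proof (Hzf c Hc) as Zc. pose proof (HFr c Hc) as Rc.
      assert (Hmz : (m | zf c)).
      { unfold zf. apply Z.divide_add_r; auto. apply Z.divide_mul_r.
        replace (c - fmin) with ((c - f0) - (fmin - f0)) by ring.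
        apply Z.divide_sub_r; auto. }
      destruct Hc'C as [Hc'C|[Hc'C|Hc'C]].
      1,2: assert (Hmc' : (m | c')) by (apply Hcls0; tauto);
        assert (Hmw : (m | w)) by (replace w with (zf c - c') by lia; apply Z.divide_sub_r; auto);
        destruct Hw as [Hw|[Hw|[Hw _]]];
        [rewrite Hw in E
        |exfalso; apply Hnf0; replace f0 with ((w + f0) - w) by ring; apply Z.divide_sub_r; auto
        |contradiction].
      * destruct Hc'C as [k [Hk Ek]]. nia.
      * pose proof (HBl c' Hc'C). lia.
      * pose proof (HFc c' Hc'C) as Hcf. pose proof (HFr c' Hc'C).
        destruct Hw as [Hw|[Hw|[_ Hw]]]; [ | unfold V in Hw; destruct Hw as [[Hw1 Hw2]|[Hw1 [Hw2 Hw3]]] | ].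
        -- exfalso; apply Hnf0; replace f0 with (c' - (c' - f0)) by ring; apply Z.divide_sub_r; auto.
           replace c' with (zf c) by lia; auto.
        -- lia.
        -- destruct (Z.eq_dec c c') as [->|Hne]; [contradiction|].
           apply Hw3. exists c, c'. repeat split; auto. lia.
        -- apply Hw; replace (w + f0) with (zf c - (c' - f0)) by lia; apply Z.divide_sub_r; auto.
Qed.

Theorem proposition3 (m : Z) (B F : Z -> Prop) :
  2 <= m ->
  finite_set B ->
  (forall b, B b -> (m | b)) ->
  finite_set F ->
  (exists f, F f) ->
  (forall f g, F f -> F g -> f mod m = g mod m) ->
  (forall f, F f -> f mod m <> 0) ->
  (exists W : Z -> Prop,
     forall z, (mult_neg m z /\ ~ B z) <-> sumset F W z) ->
  arises_as_MAC (fun z => mult_nonneg m z \/ B z \/ F z).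
Proof.
  intros Hm HB HBd HF Hne Hcong Hnz [W HW].
  destruct (fin_bound B HB) as [Bb [HBb HBl]].
  destruct (fin_minmax F HF Hne) as [fmin [fmax [Hfmin [Hfmax HFr]]]].
  set (d := fmax - fmin).
  set (N := Z.abs (-Bb - 1 - fmax) + Z.abs fmin + (2*d+1)*d + d + 1).
  assert (Hd : 0 <= d) by (pose proof (HFr _ Hfmin); unfold d; lia).
  apply (core m B F W fmax fmin fmax Bb (-Bb - 1 - fmax) (m * (- N))); auto.
  - intro Hd'. apply (Hnz fmax Hfmax). apply Z.mod_divide; auto. lia.
  - intros f Hf. apply Z.mod_divide; [lia|].
    rewrite Zminus_mod, (Hcong f fmax Hf Hfmax), Z.sub_diag. apply Z.mod_0_l. lia.
  - ring.
  - apply Z.divide_factor_l.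
  - fold d. assert (0 <= (2*d+1)*d) by nia. subst N. nia.
Qed.
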